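(* Let $a\in\mathbb{C}$ with $0<|a|<1$, $M\in\mathbb{N}$ (a positive integer), and $\varphi(z)=az^M$. Define $\nu=\left\lfloor\frac{2-|a|}{1-|a|}\right\rfloor$ and $\mathcal{N}_M=\max\{1,\,M(\nu-1)|a|^{\nu-1}\}$. Then the operator norm of $D_\varphi$ acting on the Hilbert space $S^2$ is $\|D_\varphi\|=\mathcal{N}_M$.
   Context: $\mathbb{D}$ is the open unit disk. $S^2$ is the Hilbert space of analytic functions $f(z)=\sum_{n\ge0}a_nz^n$ on $\mathbb{D}$ with $\|f\|_{S^2}^2=|a_0|^2+\sum_{n\ge1}n^2|a_n|^2<\infty$ (equivalently $\|f\|_{S^2}^2=|f(0)|^2+\|f'\|_{H^2}^2$). $D_\varphi f=f'\circ\varphi$. *)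

(* Defs.v *)
From Stdlib Require Import Reals.
From Coquelicot Require Import Coquelicot.
Open Scope R_scope.

Definition has_coeffs (f : C -> C) (c : nat -> C) : Prop :=
  forall z : C, Cmod z < 1 ->
    is_series (K := C_AbsRing) (V := C_NormedModule)
      (fun n => (c n * Cpow z n)%C) (f z).

Definition S2_weight (c : nat -> C) (n : nat) : R := (INR n)^2 * (Cmod (c n))^2.

Definition in_S2 (f : C -> C) : Prop :=
  exists c, has_coeffs f c /\ ex_series (S2_weight c).

Definition is_S2norm (f : C -> C) (r : R) : Prop :=
  exists c s, has_coeffs f c /\ is_series (S2_weight c) s /\
    r = sqrt ((Cmod (c 0%nat))^2 + s).

Definition is_Dphi (phi : C -> C) (f g : C -> C) : Prop :=
  forall z : C, Cmod z < 1 ->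
    is_derive (K := C_AbsRing) (V := C_NormedModule) f (phi z) (g z).

Definition Dphi_opnorm (phi : C -> C) : Rbar :=
  Lub_Rbar (fun r => exists f g rf, in_S2 f /\ is_S2norm f rf /\ rf <= 1 /\
                       is_Dphi phi f g /\ in_S2 g /\ is_S2norm g r).

Definition nu_of (a : C) : nat :=
  Z.to_nat (floor ((2 - Cmod a) / (1 - Cmod a))).

Definition N_M (a : C) (M : nat) : R :=
  Rmax 1 (INR M * (INR (nu_of a) - 1) * (Cmod a) ^ (nu_of a - 1)).

(* Main.v *)
Require Import Defs.
From Stdlib Require Import ZArith Reals Lra Lia Psatz Classical ClassicalEpsilon.
From Coquelicot Require Import Coquelicot.
Open Scope R_scope.

Lemma C_minus_eq (x y : C) : minus x y = (x - y)%C.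
Proof. reflexivity. Qed.
Lemma C_plus_eq (x y : C) : plus x y = (x + y)%C.
Proof. reflexivity. Qed.
Lemma C_scal_eq (x y : C) : scal x y = (x * y)%C.
Proof. reflexivity. Qed.
Lemma C_opp_eq (x : C) : opp x = (- x)%C.
Proof. reflexivity. Qed.
Lemma C_zero_eq : (zero : C) = 0%C.
Proof. reflexivity. Qed.

Lemma is_series_C_unique (a : nat -> C) l1 l2 :
  is_series a l1 -> is_series a l2 -> l1 = l2.
Proof.
  intros H1 H2. apply (filterlim_locally_unique (F := eventually) (sum_n a)); auto.
Qed.

Lemma is_series_R_unique (a : nat -> R) l1 l2 :
  is_series a l1 -> is_series a l2 -> l1 = l2.
Proof.
  intros H1 H2. apply is_series_unique in H1. apply is_series_unique in H2. congruence.
Qed.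

Lemma sum_n_Cmod_le (a : nat -> C) (b : nat -> R) N :
  (forall n, Cmod (a n) <= b n) -> Cmod (sum_n a N) <= sum_n b N.
Proof.
  intros H. induction N.
  - rewrite !sum_O. auto.
  - rewrite !sum_Sn. eapply Rle_trans. apply Cmod_triangle.
    change (plus (sum_n b N) (b (S N))) with (sum_n b N + b (S N)). specialize (H (S N)). lra.
Qed.

Lemma series_Cmod_le (a : nat -> C) (b : nat -> R) la lb :
  is_series a la -> is_series b lb -> (forall n, Cmod (a n) <= b n) -> Cmod la <= lb.
Proof.
  intros Ha Hb H.
  assert (HL : is_lim_seq (fun N => Cmod (sum_n a N)) (Cmod la)).
  { unfold is_lim_seq. simpl.
    change (filterlim (fun N => @norm C_AbsRing C_NormedModule (sum_n a N)) eventually (locally (@norm C_AbsRing C_NormedModule la))).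
    eapply filterlim_comp. apply Ha. apply filterlim_norm. }
  assert (HL2 : is_lim_seq (sum_n b) lb) by exact Hb.
  pose proof (is_lim_seq_le _ _ _ _ (fun N => sum_n_Cmod_le a b N H) HL HL2). simpl in H0. auto.
Qed.

Lemma series_R_le (a b : nat -> R) la lb :
  is_series a la -> is_series b lb -> (forall n, a n <= b n) -> la <= lb.
Proof.
  intros Ha Hb H.
  assert (Hp : forall N, sum_n a N <= sum_n b N).
  { induction N. rewrite !sum_O; auto. rewrite !sum_Sn.
    change (sum_n a N + a (S N) <= sum_n b N + b (S N)). specialize (H (S N)). lra. }
  pose proof (is_lim_seq_le _ _ la lb Hp Ha Hb). simpl in H0; auto.
Qed.

Lemma sum_n_const_after {G : AbelianMonoid} (a : nat -> G) N0 :
  (forall n, (N0 < n)%nat -> a n = zero) ->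
  forall d, sum_n a (N0 + d) = sum_n a N0.
Proof.
  intros H d. induction d.
  - now rewrite Nat.add_0_r.
  - rewrite Nat.add_succ_r, sum_Sn, IHd, H by lia. apply plus_zero_r.
Qed.

Lemma is_series_finite {K : AbsRing} {V : NormedModule K} (a : nat -> V) N0 :
  (forall n, (N0 < n)%nat -> a n = zero) -> is_series a (sum_n a N0).
Proof.
  intros H P HP. exists N0. intros n Hn.
  replace n with (N0 + (n - N0))%nat by lia.
  rewrite (sum_n_const_after a N0 H). exact (locally_singleton _ _ HP).
Qed.


Definition gap {K : AbsRing} {V : NormedModule K} (M : nat) (u : nat -> V) (k : nat) : V :=
  if Nat.eqb (k mod M) 0 then u (k / M)%nat else zero.

Lemma gap_eq {K : AbsRing} {V : NormedModule K} M (u : nat -> V) q r :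
  (r < M)%nat -> gap M u (M * q + r) = if Nat.eqb r 0 then u q else zero.
Proof.
  intros Hr. unfold gap.
  rewrite <- (Nat.mod_unique (M*q+r) M q r Hr eq_refl).
  rewrite <- (Nat.div_unique (M*q+r) M q r Hr eq_refl). reflexivity.
Qed.

Lemma sum_gap {K : AbsRing} {V : NormedModule K} M (u : nat -> V) :
  (0 < M)%nat -> forall m j, (j < M)%nat -> sum_n (gap M u) (M * m + j) = sum_n u m.
Proof.
  intros HM m. induction m; intros j Hj.
  - induction j.
    + rewrite Nat.mul_0_r. simpl. rewrite !sum_O.
      pose proof (gap_eq M u 0 0 HM) as E. rewrite Nat.mul_0_r in E. simpl in E. exact E.
    + replace (M * 0 + S j)%nat with (S (M*0+j)) by lia. rewrite sum_Sn, IHj by lia.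
      replace (S (M*0+j)) with (M*0 + S j)%nat by lia. rewrite gap_eq by lia.
      simpl. rewrite sum_O. apply plus_zero_r.
  - induction j.
    + replace (M * S m + 0)%nat with (S (M*m + (M-1))) by lia.
      rewrite sum_Sn, IHm by lia. rewrite sum_Sn. f_equal.
      replace (S (M*m + (M-1))) with (M * S m + 0)%nat by lia. rewrite gap_eq by lia. reflexivity.
    + replace (M * S m + S j)%nat with (S (M * S m + j)) by lia. rewrite sum_Sn, IHj by lia.
      replace (S (M * S m + j)) with (M * S m + S j)%nat by lia. rewrite gap_eq by lia.
      simpl. apply plus_zero_r.
Qed.

Lemma sum_gap_all {K : AbsRing} {V : NormedModule K} M (u : nat -> V) :
  (0 < M)%nat -> forall N, sum_n (gap M u) N = sum_n u (N / M)%nat.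
Proof.
  intros HM N. rewrite (Nat.div_mod N M) at 1 by lia.
  apply sum_gap; auto. apply Nat.mod_upper_bound. lia.
Qed.

Lemma is_series_gap {K : AbsRing} {V : NormedModule K} M (u : nat -> V) l :
  (0 < M)%nat -> is_series u l -> is_series (gap M u) l.
Proof.
  intros HM Hu. unfold is_series.
  eapply filterlim_ext. intros N. symmetry. apply sum_gap_all; auto.
  eapply filterlim_comp. 2: apply Hu.
  intros P [N0 HN0]. exists (M * N0)%nat. intros n Hn. apply HN0.
  apply Nat.div_le_lower_bound; lia.
Qed.


Lemma nu_facts (a : C) : 0 < Cmod a < 1 ->
  (2 <= nu_of a)%nat /\
  INR (nu_of a - 1) * (1 - Cmod a) <= 1 < (INR (nu_of a - 1) + 1) * (1 - Cmod a) /\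
  INR (nu_of a) - 1 = INR (nu_of a - 1).
Proof.
  intros Hx. set (x := Cmod a) in *. unfold nu_of. fold x.
  unfold floor. destruct (floor_ex ((2 - x) / (1 - x))) as [z [H1 H2]]. simpl.
  assert (Hq : (2 - x) / (1 - x) > 2).
  { apply Rlt_gt. apply Rmult_lt_reg_r with (1 - x). lra.
    unfold Rdiv. rewrite Rmult_assoc, Rinv_l by lra. lra. }
  assert (Hz : (1 < z)%Z). { apply lt_IZR. lra. }
  assert (HI : INR (Z.to_nat z) = IZR z).
  { rewrite INR_IZR_INZ. rewrite Znat.Z2Nat.id by lia. reflexivity. }
  assert (Hn : (2 <= Z.to_nat z)%nat) by lia.
  assert (Hk : INR (Z.to_nat z - 1) = IZR z - 1).
  { rewrite minus_INR by lia. rewrite HI. simpl. lra. }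
  assert (E : (2 - x) / (1 - x) * (1 - x) = 2 - x).
  { unfold Rdiv. rewrite Rmult_assoc, Rinv_l by lra. lra. }
  split; [auto|]. split; [|rewrite Hk, HI; lra].
  rewrite Hk. split.
  - assert (IZR z * (1 - x) <= (2 - x) / (1 - x) * (1 - x)) by (apply Rmult_le_compat_r; lra).
    nra.
  - assert ((2 - x) / (1 - x) * (1 - x) < (IZR z + 1) * (1 - x)) by (apply Rmult_lt_compat_r; lra).
    nra.
Qed.

Definition hh (x : R) (m : nat) := INR m * x ^ m.

Lemma hh_up x m : 0 < x < 1 -> (INR m + 1) * (1 - x) <= 1 -> hh x m <= hh x (S m).
Proof.
  intros Hx H. unfold hh. rewrite S_INR. simpl.
  assert (0 <= x ^ m) by (apply pow_le; lra).
  assert (INR m <= (INR m + 1) * x) by nra. nra.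
Qed.

Lemma hh_down x m : 0 < x < 1 -> 1 < (INR m + 1) * (1 - x) -> hh x (S m) <= hh x m.
Proof.
  intros Hx H. unfold hh. rewrite S_INR. simpl.
  assert (0 <= x ^ m) by (apply pow_le; lra).
  assert ((INR m + 1) * x <= INR m) by nra. nra.
Qed.

Lemma hh_max x k : 0 < x < 1 -> INR k * (1 - x) <= 1 < (INR k + 1) * (1 - x) ->
  forall m, hh x m <= hh x k.
Proof.
  intros Hx [Hk1 Hk2] m.
  destruct (Nat.le_gt_cases m k) as [Hm|Hm].
  - assert (forall d m, (m + d = k)%nat -> hh x m <= hh x k).
    { induction d; intros m' E.
      - rewrite Nat.add_0_r in E. subst. lra.
      - eapply Rle_trans. apply hh_up; auto.
        + assert (INR m' + 1 <= INR k).
          { rewrite <- S_INR. apply le_INR. lia. }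
          assert (0 < 1 - x) by lra. nra.
        + apply IHd. lia. }
    apply (H (k - m)%nat). lia.
  - assert (forall d, hh x (k + d) <= hh x k).
    { induction d.
      - rewrite Nat.add_0_r. lra.
      - rewrite Nat.add_succ_r. eapply Rle_trans. 2: apply IHd. apply hh_down; auto.
        assert (INR k <= INR (k + d)) by (apply le_INR; lia).
        assert (0 < 1 - x) by lra. nra. }
    replace m with (k + (m - k))%nat by lia. apply H.
Qed.


Definition ee (r : R) (n : nat) := (INR n + 1) ^ 2 * r ^ n.

Lemma ee_pos r n : 0 < r -> 0 < ee r n.
Proof.
  intros Hr. unfold ee. apply Rmult_lt_0_compat.
  + assert (0 <= INR n) by apply pos_INR. nra.
  + apply pow_lt. lra.
Qed.

Lemma ex_series_ee r : 0 < r < 1 -> ex_series (ee r).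
Proof.
  intros Hr. apply ex_series_Rabs.
  apply (ex_series_DAlembert _ r). lra.
  - intros n. apply Rgt_not_eq, ee_pos. lra.
  - assert (H1 : is_lim_seq (fun n => / (INR n + 1)) 0).
    { assert (H : is_lim_seq (fun n => INR n + 1) p_infty).
      { pose proof is_lim_seq_INR as H. apply is_lim_seq_incr_1 in H.
        eapply is_lim_seq_ext. 2: exact H. intros n. simpl. apply S_INR. }
      apply is_lim_seq_inv in H. exact H. discriminate. }
    assert (H2 : is_lim_seq (fun n => (1 + / (INR n + 1)) * (1 + / (INR n + 1)) * r) ((1+0)*(1+0)*r)).
    { apply is_lim_seq_mult'. apply is_lim_seq_mult'; apply is_lim_seq_plus'; auto; apply is_lim_seq_const.
      apply is_lim_seq_const. }
    replace (Finite r) with (Finite ((1+0)*(1+0)*r)) by (f_equal; ring).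
    eapply is_lim_seq_ext. 2: exact H2. intros n.
    assert (0 <= INR n) by apply pos_INR.
    assert (0 < r ^ n) by (apply pow_lt; lra).
    unfold ee. rewrite S_INR. simpl pow.
    rewrite Rabs_pos_eq.
    + field. split; lra.
    + apply Rmult_le_pos. apply Rmult_le_pos. nra. nra.
      apply Rlt_le, Rinv_0_lt_compat. nra.
Qed.


Lemma D_bound (w h : C) (r : R) n : Cmod w <= r -> Cmod (w + h) <= r ->
  r * Cmod (Cpow (w + h) n - Cpow w n) <= INR n * Cmod h * r ^ n.
Proof.
  intros Hw Hwh. assert (Hr : 0 <= r) by (pose proof (Cmod_ge_0 w); lra).
  induction n.
  - simpl. replace (1 - 1)%C with (RtoC 0) by (apply injective_projections; simpl; ring).
    rewrite Cmod_0. lra.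
  - replace (Cpow (w + h) (S n) - Cpow w (S n))%C with
      ((w + h) * (Cpow (w + h) n - Cpow w n) + h * Cpow w n)%C by (rewrite !Cpow_S; ring).
    pose proof (Cmod_triangle ((w + h) * (Cpow (w + h) n - Cpow w n)) (h * Cpow w n)) as T.
    rewrite !Cmod_mult, Cmod_pow in T.
    assert (Hp : Cmod w ^ n <= r ^ n) by (apply pow_incr; split; [apply Cmod_ge_0|auto]).
    pose proof (Cmod_ge_0 h). pose proof (Cmod_ge_0 (Cpow (w + h) n - Cpow w n)).
    pose proof (Cmod_ge_0 w).
    rewrite S_INR. simpl pow.
    assert (r * (Cmod (w + h) * Cmod (Cpow (w + h) n - Cpow w n)) <= r * (r * Cmod (Cpow (w + h) n - Cpow w n))).
    { apply Rmult_le_compat_l; auto. apply Rmult_le_compat_r; auto. }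
    assert (r * (Cmod h * Cmod w ^ n) <= r * (Cmod h * r ^ n)).
    { apply Rmult_le_compat_l; auto. apply Rmult_le_compat_l; auto. }
    assert (r * (r * Cmod (Cpow (w + h) n - Cpow w n)) <= r * (INR n * Cmod h * r ^ n)).
    { apply Rmult_le_compat_l; auto. }
    nra.
Qed.

Definition Fd (w h : C) (n : nat) : C :=
  (Cpow (w + h) (S n) - Cpow w (S n) - INR (S n) * Cpow w n * h)%C.

Lemma F_bound (w h : C) (r : R) n : Cmod w <= r -> Cmod (w + h) <= r ->
  r * Cmod (Fd w h n) <= (INR n + 1) ^ 2 * Cmod h ^ 2 * r ^ n.
Proof.
  intros Hw Hwh. assert (Hr : 0 <= r) by (pose proof (Cmod_ge_0 w); lra).
  induction n.
  - unfold Fd. simpl. replace ((w + h) * 1 - w * 1 - 1 * 1 * h)%C with (RtoC 0)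
      by (apply injective_projections; simpl; ring).
    rewrite Cmod_0. simpl. pose proof (Cmod_ge_0 h). nra.
  - replace (Fd w h (S n)) with (w * Fd w h n + h * (Cpow (w + h) (S n) - Cpow w (S n)))%C.
    2:{ unfold Fd. rewrite (S_INR (S n)). rewrite RtoC_plus.
        rewrite (Cpow_S (w+h) (S n)), (Cpow_S w (S n)), (Cpow_S w n). ring. }
    pose proof (Cmod_triangle (w * Fd w h n) (h * (Cpow (w + h) (S n) - Cpow w (S n)))) as T.
    rewrite !Cmod_mult in T.
    pose proof (D_bound w h r (S n) Hw Hwh) as HD.
    pose proof (Cmod_ge_0 h). pose proof (Cmod_ge_0 (Fd w h n)).
    pose proof (Cmod_ge_0 w).
    assert (0 <= INR n) by apply pos_INR.
    assert (0 <= r ^ n) by (apply pow_le; auto).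
    rewrite S_INR in *. simpl pow in *.
    assert (A1 : r * (Cmod w * Cmod (Fd w h n)) <= r * (r * Cmod (Fd w h n))).
    { apply Rmult_le_compat_l; auto. apply Rmult_le_compat_r; auto. }
    assert (A2 : r * (r * Cmod (Fd w h n)) <= r * ((INR n + 1) * ((INR n + 1) * 1) * (Cmod h * (Cmod h * 1)) * r ^ n)).
    { apply Rmult_le_compat_l; auto. }
    assert (A3 : r * (Cmod h * Cmod (Cpow (w + h) (S n) - Cpow w (S n))) <= Cmod h * ((INR n + 1) * Cmod h * (r * r ^ n))).
    { rewrite <- Rmult_assoc, (Rmult_comm r), Rmult_assoc. apply Rmult_le_compat_l; auto. }
    assert (A4 : 0 <= Cmod h * Cmod h * r * r ^ n).
    { repeat apply Rmult_le_pos; auto. }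
    nra.
Qed.


Lemma is_derive_of_bound (f : C -> C) w L K d : 0 < d -> 0 <= K ->
  (forall h, Cmod h < d -> Cmod (f (w + h) - f w - h * L)%C <= K * Cmod h ^ 2) ->
  is_derive f w L.
Proof.
  intros Hd HK H. split.
  - apply is_linear_scal_l.
  - intros x Hx. apply (@is_filter_lim_locally_unique C_AbsRing (AbsRing_NormedModule C_AbsRing)) in Hx. subst x.
    intros eps.
    assert (Hp : 0 < Rmin d (eps / (K + 1))).
    { apply Rmin_pos; auto. apply Rdiv_lt_0_compat. apply cond_pos. lra. }
    exists (mkposreal _ Hp). intros y Hy.
    change (Cmod ((f y - f w) - (y - w) * L)%C <= eps * Cmod (y - w)%C).
    change (Cmod (y - w)%C < Rmin d (eps / (K + 1))) in Hy.
    set (h := (y - w)%C) in *.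
    replace y with (w + h)%C by (unfold h; ring).
    assert (Hh1 : Cmod h < d) by (eapply Rlt_le_trans; [apply Hy|apply Rmin_l]).
    assert (Hh2 : Cmod h <= eps / (K + 1)) by (left; eapply Rlt_le_trans; [apply Hy|apply Rmin_r]).
    eapply Rle_trans. apply H; auto.
    pose proof (Cmod_ge_0 h). pose proof (cond_pos eps).
    assert (K * Cmod h <= eps).
    { apply Rle_trans with ((K + 1) * (eps / (K + 1))).
      - assert (K * Cmod h <= (K+1) * Cmod h) by nra.
        assert ((K+1) * Cmod h <= (K+1) * (eps / (K+1))) by (apply Rmult_le_compat_l; lra). lra.
      - right. field. lra. }
    simpl. nra.
Qed.

Lemma Cmod_INR n : Cmod (RtoC (INR n)) = INR n.
Proof. rewrite Cmod_R. apply Rabs_pos_eq, pos_INR. Qed.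

Lemma ex_dseries (c : nat -> C) B w : (forall n, Cmod (c n) <= B) -> Cmod w < 1 ->
  ex_series (fun m => (INR (S m) * c (S m) * Cpow w m)%C).
Proof.
  intros Hc Hw. set (r := (1 + Cmod w) / 2).
  pose proof (Cmod_ge_0 w).
  assert (Hr : 0 < r < 1) by (unfold r; lra).
  apply (@ex_series_le C_AbsRing C_CompleteNormedModule _ (fun m => B * ee r m)).
  - intros m. change (Cmod (INR (S m) * c (S m) * Cpow w m)%C <= B * ee r m).
    rewrite !Cmod_mult, Cmod_INR, Cmod_pow.
    assert (HB : 0 <= B) by (eapply Rle_trans; [apply Cmod_ge_0|apply (Hc 0%nat)]).
    assert (Hp : Cmod w ^ m <= r ^ m) by (apply pow_incr; unfold r; lra).
    assert (0 <= Cmod w ^ m) by (apply pow_le; lra).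
    pose proof (Hc (S m)). pose proof (Cmod_ge_0 (c (S m))).
    unfold ee. rewrite S_INR. assert (0 <= INR m) by apply pos_INR.
    assert (Cmod (c (S m)) * Cmod w ^ m <= B * r ^ m) by (apply Rmult_le_compat; auto).
    assert (0 <= B * r ^ m) by (apply Rmult_le_pos; [auto| apply pow_le; lra]).
    simpl pow. nra.
  - apply (ex_series_scal_l (V := R_NormedModule)). apply ex_series_ee; auto.
Qed.

Lemma ex_pseries_C (c : nat -> C) B w : (forall n, Cmod (c n) <= B) -> Cmod w < 1 ->
  ex_series (fun n => (c n * Cpow w n)%C).
Proof.
  intros Hc Hw. set (r := (1 + Cmod w) / 2).
  pose proof (Cmod_ge_0 w).
  assert (Hr : 0 < r < 1) by (unfold r; lra).
  apply (@ex_series_le C_AbsRing C_CompleteNormedModule _ (fun m => B * ee r m)).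
  - intros m. change (Cmod (c m * Cpow w m)%C <= B * ee r m).
    rewrite !Cmod_mult, Cmod_pow.
    assert (HB : 0 <= B) by (eapply Rle_trans; [apply Cmod_ge_0|apply (Hc 0%nat)]).
    assert (Hp : Cmod w ^ m <= r ^ m) by (apply pow_incr; unfold r; lra).
    assert (0 <= Cmod w ^ m) by (apply pow_le; lra).
    pose proof (Hc m). pose proof (Cmod_ge_0 (c m)).
    unfold ee. assert (0 <= INR m) by apply pos_INR.
    assert (Cmod (c m) * Cmod w ^ m <= B * r ^ m) by (apply Rmult_le_compat; auto).
    assert (0 <= B * r ^ m) by (apply Rmult_le_pos; [auto| apply pow_le; lra]).
    simpl pow. nra.
  - apply (ex_series_scal_l (V := R_NormedModule)). apply ex_series_ee; auto.
Qed.


Lemma is_series_R0 : is_series (fun _ : nat => 0) 0.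
Proof.
  pose proof (is_series_finite (K:=R_AbsRing) (V := R_NormedModule) (fun _ => zero) 0 (fun _ _ => eq_refl)) as H0.
  rewrite sum_O in H0. exact H0.
Qed.

Lemma ps_derive (f : C -> C) c B w L : has_coeffs f c -> (forall n, Cmod (c n) <= B) ->
  Cmod w < 1 -> is_series (fun m => (INR (S m) * c (S m) * Cpow w m)%C) L ->
  is_derive f w L.
Proof.
  intros Hf Hc Hw HL. set (r := (1 + Cmod w) / 2).
  pose proof (Cmod_ge_0 w).
  assert (Hr : 0 < r < 1) by (unfold r; lra).
  assert (HB : 0 <= B) by (eapply Rle_trans; [apply Cmod_ge_0|apply (Hc 0%nat)]).
  destruct (ex_series_ee r Hr) as [E HE].
  assert (HE0 : 0 <= E).
  { apply (series_R_le (fun _ => 0) (ee r) 0 E); auto. apply is_series_R0.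
    intros; left; apply ee_pos; lra. }
  apply is_derive_of_bound with (d := r - Cmod w) (K := B * E / r).
  { unfold r; lra. }
  { apply Rmult_le_pos. apply Rmult_le_pos; auto. apply Rlt_le, Rinv_0_lt_compat; lra. }
  intros h Hh.
  assert (Hwh : Cmod (w + h)%C <= r).
  { pose proof (Cmod_triangle w h). lra. }
  assert (Hwh1 : Cmod (w + h)%C < 1) by lra.
  pose proof (Hf _ Hwh1) as H1. pose proof (Hf _ Hw) as H2.
  pose proof (is_series_minus _ _ _ _ H1 H2) as S1.
  assert (S1' : is_series (fun m => (c (S m) * Cpow (w + h) (S m) - c (S m) * Cpow w (S m))%C)
                  (f (w + h)%C - f w)%C).
  { apply (is_series_incr_1 (fun n => (c n * Cpow (w + h) n - c n * Cpow w n)%C)).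
    match goal with |- is_series _ ?v => replace v with (plus (f (w + h)%C) (opp (f w))) end.
    eapply is_series_ext. 2: exact S1. intros n. reflexivity.
    change ((f (w + h)%C + - f w)%C = ((f (w + h)%C - f w) + (c 0%nat * 1 - c 0%nat * 1))%C).
    ring. }
  pose proof (is_series_scal h _ _ HL) as S2.
  pose proof (is_series_minus _ _ _ _ S1' S2) as S3.
  assert (S4 : is_series (fun m => (c (S m) * Fd w h m)%C) (f (w + h)%C - f w - h * L)%C).
  { eapply is_series_ext. 2: exact S3. intros m. unfold Fd.
    change ((c (S m) * Cpow (w + h) (S m) - c (S m) * Cpow w (S m)) + - (h * (INR (S m) * c (S m) * Cpow w m)) =
            c (S m) * (Cpow (w + h) (S m) - Cpow w (S m) - INR (S m) * Cpow w m * h))%C.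
    ring. }
  assert (S5 : is_series (fun m => B * Cmod h ^ 2 / r * ee r m) (B * Cmod h ^ 2 / r * E)).
  { apply (is_series_scal_l (V := R_NormedModule)). exact HE. }
  eapply Rle_trans. apply (series_Cmod_le _ _ _ _ S4 S5).
  - intros m. rewrite Cmod_mult.
    pose proof (F_bound w h r m (Rlt_le _ _ (proj1 (conj (Rle_lt_trans _ _ _ (Rle_refl _) (ltac:(unfold r; lra) : Cmod w < r)) I))) Hwh) as HF.
    pose proof (Hc (S m)). pose proof (Cmod_ge_0 (c (S m))). pose proof (Cmod_ge_0 (Fd w h m)).
    assert (Cmod (Fd w h m) <= Cmod h ^ 2 / r * ee r m).
    { unfold ee. apply Rmult_le_reg_l with r. lra.
      replace (r * (Cmod h ^ 2 / r * ((INR m + 1) ^ 2 * r ^ m))) with ((INR m + 1) ^ 2 * Cmod h ^ 2 * r ^ m)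
        by (field; lra). exact HF. }
    apply Rle_trans with (B * (Cmod h ^ 2 / r * ee r m)).
    + apply Rmult_le_compat; auto.
    + right. unfold Rdiv. ring.
  - right. field. lra.
Qed.


Lemma sum_n_lower_zero {G : AbelianMonoid} (a : nat -> G) k :
  (forall j, (j < k)%nat -> a j = zero) -> sum_n a k = a k.
Proof.
  induction k; intros H.
  - apply sum_O.
  - rewrite sum_Sn, IHk. rewrite H by lia. apply plus_zero_l.
    intros j Hj. apply H. lia.
Qed.

Lemma coef_growth (e : nat -> C) :
  is_series (fun n => (e n * Cpow (RtoC (/2)) n)%C) (RtoC 0) ->
  exists B0, 0 <= B0 /\ forall n, Cmod (e n) <= B0 * 2 ^ n.
Proof.
  intros H.
  destruct (filterlim_bounded (K := C_AbsRing) (V := C_NormedModule) (sum_n (fun n => (e n * Cpow (RtoC (/2)) n)%C)))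
    as [Mb HMb].
  { exists (RtoC 0). exact H. }
  set (t := fun n => (e n * Cpow (RtoC (/2)) n)%C) in *.
  assert (Ht : forall n, Cmod (t n) <= 2 * Mb).
  { intros n. assert (HM0 : 0 <= Mb) by (eapply Rle_trans; [apply Cmod_ge_0|apply (HMb 0%nat)]).
    destruct n.
    - rewrite <- (sum_O t). pose proof (HMb 0%nat). change (Cmod (sum_n t 0) <= Mb) in H0. lra.
    - replace (t (S n)) with (sum_n t (S n) - sum_n t n)%C.
      2:{ rewrite sum_Sn. change ((sum_n t n + t (S n)) - sum_n t n = t (S n))%C. ring. }
      pose proof (HMb (S n)). pose proof (HMb n).
      change (Cmod (sum_n t (S n)) <= Mb) in H0. change (Cmod (sum_n t n) <= Mb) in H1.
      pose proof (Cmod_triangle (sum_n t (S n)) (- sum_n t n)%C). rewrite Cmod_opp in H2. unfold Cminus. lra. }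
  exists (2 * Mb). split.
  { pose proof (Ht 0%nat). pose proof (Cmod_ge_0 (t 0%nat)). lra. }
  intros n. specialize (Ht n). unfold t in Ht. rewrite Cmod_mult, Cmod_pow, Cmod_R in Ht.
  rewrite Rabs_pos_eq in Ht by lra.
  assert (E : (/2) ^ n * 2 ^ n = 1) by (rewrite <- Rpow_mult_distr; replace (/2 * 2) with 1 by field; apply pow1).
  assert (0 < 2 ^ n) by (apply pow_lt; lra).
  replace (Cmod (e n)) with (Cmod (e n) * (/ 2) ^ n * 2 ^ n) by (rewrite Rmult_assoc, E; ring).
  apply Rmult_le_compat_r; lra.
Qed.

Lemma coef_zero (e : nat -> C) :
  (forall z, Cmod z < 1 -> is_series (fun n => (e n * Cpow z n)%C) (RtoC 0)) -> forall n, e n = RtoC 0.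
Proof.
  intros H.
  destruct (coef_growth e) as [B0 [HB0 Hg]].
  { apply H. rewrite Cmod_R, Rabs_pos_eq; lra. }
  intros n. induction n as [k IH] using (well_founded_induction lt_wf).
  assert (Hb : forall t, 0 < t <= /4 -> Cmod (e k) <= B0 * 2 ^ (S (S k)) * t).
  { intros t Ht.
    assert (Hz : Cmod (RtoC t) < 1) by (rewrite Cmod_R, Rabs_pos_eq; lra).
    pose proof (H _ Hz) as Hs.
    set (a := fun n => (e n * Cpow (RtoC t) n)%C) in *.
    assert (Hlow : forall j, (j < k)%nat -> a j = zero).
    { intros j Hj. unfold a. rewrite IH by auto. change (0 * Cpow t j = 0)%C. ring. }
    assert (Htail : is_series (fun j => a (S k + j)%nat) (opp (sum_n a k))).
    { apply is_series_incr_n. lia. simpl pred.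
      match goal with |- is_series _ ?v => replace v with (RtoC 0) end. exact Hs.
      change (RtoC 0 = (- sum_n a k + sum_n a k)%C). ring. }
    rewrite sum_n_lower_zero in Htail by auto.
    assert (Hgeo : is_series (fun j => B0 * (2 * t) ^ (S k) * (2 * t) ^ j)
                    (B0 * (2 * t) ^ (S k) * / (1 - 2 * t))).
    { apply (is_series_scal_l (V := R_NormedModule)). apply is_series_geom.
      rewrite Rabs_pos_eq; lra. }
    pose proof (series_Cmod_le _ _ _ _ Htail Hgeo) as Hle.
    assert (Hle' : Cmod (opp (a k)) <= B0 * (2 * t) ^ S k * / (1 - 2 * t)).
    { apply Hle. intros j. unfold a. rewrite Cmod_mult, Cmod_pow, Cmod_R, Rabs_pos_eq by lra.
      assert (0 <= t ^ (S k + j)) by (apply pow_le; lra).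
      eapply Rle_trans. apply Rmult_le_compat_r. auto. apply Hg.
      right. rewrite Rmult_assoc, <- Rpow_mult_distr, Rmult_assoc, <- pow_add.
      rewrite Rpow_mult_distr. ring. }
    change (Cmod (- a k)%C <= B0 * (2 * t) ^ S k * / (1 - 2 * t)) in Hle'.
    rewrite Cmod_opp in Hle'. unfold a in Hle'.
    rewrite Cmod_mult, Cmod_pow, Cmod_R, Rabs_pos_eq in Hle' by lra.
    assert (Htk : 0 < t ^ k) by (apply pow_lt; lra).
    rewrite Rpow_mult_distr in Hle'. simpl pow in Hle' |- *.
    assert (H1 : / (1 - 2 * t) <= 2).
    { apply Rmult_le_reg_l with (1 - 2 * t). lra. rewrite Rinv_r by lra. lra. }
    assert (H2 : Cmod (e k) * t ^ k <= (B0 * 2 ^ k * 2 * t * 2) * t ^ k).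
    { eapply Rle_trans. apply Hle'.
      assert (0 <= B0 * (2 * 2 ^ k * (t * t ^ k))).
      { apply Rmult_le_pos. auto. assert (0 < 2^k) by (apply pow_lt; lra).
        apply Rmult_le_pos. lra. apply Rmult_le_pos; lra. }
      apply Rle_trans with (B0 * (2 * 2 ^ k * (t * t ^ k)) * 2).
      apply Rmult_le_compat_l; auto. right. ring. }
    apply Rmult_le_reg_r in H2; auto. lra. }
  destruct (Req_dec (Cmod (e k)) 0) as [E|E]. now apply Cmod_eq_0.
  exfalso. pose proof (Cmod_ge_0 (e k)).
  set (C0 := B0 * 2 ^ S (S k)).
  assert (HC0 : 0 <= C0) by (unfold C0; apply Rmult_le_pos; auto; apply pow_le; lra).
  set (t := Rmin (/4) (Cmod (e k) / (2 * (C0 + 1)))).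
  assert (Ht1 : 0 < t). { unfold t. apply Rmin_pos. lra. apply Rdiv_lt_0_compat; lra. }
  assert (Ht2 : t <= /4) by apply Rmin_l.
  assert (Ht3 : t <= Cmod (e k) / (2 * (C0 + 1))) by apply Rmin_r.
  pose proof (Hb t (conj Ht1 Ht2)). fold C0 in H1.
  assert (C0 * t <= C0 * (Cmod (e k) / (2 * (C0 + 1)))) by (apply Rmult_le_compat_l; auto).
  assert (C0 * (Cmod (e k) / (2 * (C0 + 1))) < Cmod (e k)).
  { apply Rmult_lt_reg_r with (2 * (C0 + 1)). lra.
    replace (C0 * (Cmod (e k) / (2 * (C0 + 1))) * (2 * (C0 + 1))) with (C0 * Cmod (e k)) by (field; lra).
    nra. }
  lra.
Qed.


Lemma choice_disk (P : C -> C -> Prop) :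
  (forall z, Cmod z < 1 -> exists L, P z L) -> exists g : C -> C, forall z, Cmod z < 1 -> P z (g z).
Proof.
  intros H.
  assert (H' : forall z, exists L, Cmod z < 1 -> P z L).
  { intros z. destruct (classic (Cmod z < 1)) as [h|h].
    - destruct (H z h) as [L HL]; exists L; auto.
    - exists (RtoC 0); intros; contradiction. }
  exists (fun z => proj1_sig (constructive_indefinite_description _ (H' z))).
  intros z Hz. destruct (constructive_indefinite_description _ (H' z)); simpl; auto.
Qed.

Lemma term_le_series (a : nat -> R) l : (forall n, 0 <= a n) -> is_series a l -> forall n, a n <= l.
Proof.
  intros Hp Ha n.
  set (b := fun j => if Nat.eqb j n then a n else 0).
  assert (Hb : is_series b (a n)).
  { assert (E : sum_n b n = a n).
    { rewrite sum_n_lower_zero. unfold b. rewrite Nat.eqb_refl. auto.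
      intros j Hj. unfold b. destruct (Nat.eqb_spec j n). lia. reflexivity. }
    rewrite <- E. apply (is_series_finite (K := R_AbsRing) (V := R_NormedModule)). intros j Hj. unfold b.
    destruct (Nat.eqb_spec j n). lia. reflexivity. }
  apply (series_R_le b a); auto.
  intros j. unfold b. destruct (Nat.eqb_spec j n). subst; lra. auto.
Qed.

Lemma S2_weight_nonneg c n : 0 <= S2_weight c n.
Proof. unfold S2_weight. apply Rmult_le_pos; apply pow2_ge_0. Qed.

Lemma coef_bound c s : is_series (S2_weight c) s -> forall n, Cmod (c n) <= 1 + s + Cmod (c 0%nat).
Proof.
  intros Hs n. pose proof (term_le_series _ _ (S2_weight_nonneg c) Hs) as Ht.
  pose proof (Ht 0%nat) as H0. pose proof (Cmod_ge_0 (c 0%nat)).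
  pose proof (S2_weight_nonneg c 0). destruct n. lra.
  specialize (Ht (S n)). unfold S2_weight in Ht.
  assert (1 <= INR (S n)) by (rewrite S_INR; pose proof (pos_INR n); lra).
  pose proof (Cmod_ge_0 (c (S n))).
  assert (Cmod (c (S n)) ^ 2 <= s).
  { apply Rle_trans with (INR (S n) ^ 2 * Cmod (c (S n)) ^ 2); auto.
    assert (1 <= INR (S n) ^ 2) by nra. pose proof (pow2_ge_0 (Cmod (c (S n)))). nra. }
  simpl in H3. nra.
Qed.


Definition dco (a : C) (c : nat -> C) (m : nat) : C := (INR (S m) * c (S m) * Cpow a m)%C.
Definition dd (a : C) (M : nat) (c : nat -> C) : nat -> C := gap (V := C_NormedModule) M (dco a c).
Definition uu (a : C) (M : nat) (c : nat -> C) (m : nat) : R := INR (M * m) ^ 2 * Cmod (dco a c m) ^ 2.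

Lemma key_ineq (a : C) (M : nat) : 0 < Cmod a < 1 -> forall m, 0 <= INR M * hh (Cmod a) m <= N_M a M.
Proof.
  intros Hx m. destruct (nu_facts a Hx) as [H2 [H3 H4]].
  pose proof (hh_max (Cmod a) _ Hx H3 m) as Hm.
  split.
  - unfold hh. apply Rmult_le_pos. apply pos_INR. apply Rmult_le_pos. apply pos_INR. apply pow_le. lra.
  - unfold N_M. eapply Rle_trans. 2: apply Rmax_r.
    rewrite H4. unfold hh in Hm |- *. rewrite Rmult_assoc.
    apply Rmult_le_compat_l. apply pos_INR. auto.
Qed.

Lemma N_ge1 (a : C) (M : nat) : 1 <= N_M a M.
Proof. apply Rmax_l. Qed.

Lemma uu_bound (a : C) (M : nat) c : 0 < Cmod a < 1 -> forall m, 0 <= uu a M c m <= N_M a M ^ 2 * S2_weight c (S m).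
Proof.
  intros Hx m. split.
  - unfold uu. apply Rmult_le_pos; apply pow2_ge_0.
  - unfold uu, dco, S2_weight. rewrite !Cmod_mult, Cmod_INR, Cmod_pow, mult_INR.
    pose proof (key_ineq a M Hx m) as [K1 K2]. unfold hh in K1, K2.
    replace ((INR M * INR m) ^ 2 * (INR (S m) * Cmod (c (S m)) * Cmod a ^ m) ^ 2)
      with ((INR M * (INR m * Cmod a ^ m)) ^ 2 * (INR (S m) ^ 2 * Cmod (c (S m)) ^ 2)) by ring.
    apply Rmult_le_compat_r. apply Rmult_le_pos; apply pow2_ge_0.
    apply pow_incr. auto.
Qed.



Lemma nat_split M k : (0 < M)%nat -> exists q r, (r < M)%nat /\ k = (M * q + r)%nat.
Proof.
  intros HM. exists (k / M)%nat, (k mod M)%nat. split.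
  apply Nat.mod_upper_bound; lia. apply Nat.div_mod; lia.
Qed.

Lemma phi_in_disk a M z : 0 < Cmod a < 1 -> Cmod z < 1 -> Cmod (a * Cpow z M)%C < 1.
Proof.
  intros Ha Hz. rewrite Cmod_mult, Cmod_pow.
  assert (Cmod z ^ M <= 1).
  { rewrite <- (pow1 M). apply pow_incr. pose proof (Cmod_ge_0 z). lra. }
  assert (0 <= Cmod z ^ M) by (apply pow_le, Cmod_ge_0). nra.
Qed.

Lemma construct a M f c s : 0 < Cmod a < 1 -> (0 < M)%nat -> has_coeffs f c ->
  is_series (S2_weight c) s ->
  exists g, is_Dphi (fun z => (a * Cpow z M)%C) f g /\ has_coeffs g (dd a M c) /\
    ex_series (uu a M c) /\
    (forall T, is_series (uu a M c) T -> is_series (S2_weight (dd a M c)) T).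
Proof.
  intros Ha HM Hf Hs.
  set (B := 1 + s + Cmod (c 0%nat)).
  assert (HB : forall n, Cmod (c n) <= B) by (apply coef_bound; auto).
  destruct (choice_disk (fun z L => is_series (fun m => (INR (S m) * c (S m) * Cpow (a * Cpow z M) m)%C) L))
    as [g Hg].
  { intros z Hz. apply (ex_dseries c B); auto. apply phi_in_disk; auto. }
  exists g. split; [|split; [|split]].
  - intros z Hz. apply (ps_derive f c B); auto. apply phi_in_disk; auto.
  - intros z Hz. specialize (Hg z Hz).
    assert (G : is_series (fun m => (dco a c m * Cpow z (M * m))%C) (g z)).
    { eapply is_series_ext. 2: exact Hg. intros m.
      cbv beta. unfold dco. rewrite Cpow_mult_l, Cpow_mult_r. apply Cmult_assoc. }
    apply (is_series_gap (V := C_NormedModule) M) in G; auto.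
    eapply is_series_ext. 2: exact G. intros k. simpl.
    destruct (nat_split M k HM) as [q [r [Hr ->]]]. unfold dd. rewrite !gap_eq by auto.
    destruct (Nat.eqb_spec r 0).
    + subst r. rewrite Nat.add_0_r. reflexivity.
    + change (RtoC 0 = RtoC 0 * Cpow z (M * q + r))%C. ring.
  - apply (@ex_series_le R_AbsRing R_CompleteNormedModule _ (fun m => N_M a M ^ 2 * S2_weight c (S m))).
    + intros m. change (Rabs (uu a M c m) <= N_M a M ^ 2 * S2_weight c (S m)).
      destruct (uu_bound a M c Ha m). rewrite Rabs_pos_eq; auto.
    + apply (ex_series_scal_l (V := R_NormedModule)).
      apply (ex_series_incr_1 (S2_weight c)). exists s; auto.
  - intros T HT. apply (is_series_gap (V := R_NormedModule) M) in HT; auto.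
    eapply is_series_ext. 2: exact HT. intros k. simpl.
    destruct (nat_split M k HM) as [q [r [Hr ->]]]. unfold dd, S2_weight. rewrite !gap_eq by auto.
    destruct (Nat.eqb_spec r 0).
    + subst r. rewrite Nat.add_0_r. reflexivity.
    + change (0 = INR (M * q + r) ^ 2 * Cmod (RtoC 0) ^ 2). rewrite Cmod_0. ring.
Qed.


Lemma dd0 a M c : (0 < M)%nat -> dd a M c 0%nat = dco a c 0%nat.
Proof.
  intros HM. pose proof (gap_eq (V := C_NormedModule) M (dco a c) 0 0 HM) as E.
  rewrite Nat.mul_0_r in E. simpl in E. exact E.
Qed.

Lemma is_series_indicator0 (v : R) : is_series (fun m => if Nat.eqb m 0 then v else 0) v.
Proof.
  pose proof (is_series_finite (K := R_AbsRing) (V := R_NormedModule) (fun m => if Nat.eqb m 0 then v else 0) 0) as H.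
  rewrite sum_O in H. simpl in H. apply H. intros n Hn. destruct n. lia. reflexivity.
Qed.

Lemma upper a M f g rf r : 0 < Cmod a < 1 -> (0 < M)%nat ->
  is_S2norm f rf -> rf <= 1 -> is_Dphi (fun z => (a * Cpow z M)%C) f g -> is_S2norm g r ->
  r <= N_M a M.
Proof.
  intros Ha HM [c [s [Hc [Hs ->]]]] Hrf Hd [d' [T' [Hd' [HT' ->]]]].
  destruct (construct a M f c s Ha HM Hc Hs) as [G [HG [HGc [[T HTu] HT]]]].
  specialize (HT T HTu).
  assert (EgG : forall z, Cmod z < 1 -> g z = G z).
  { intros z Hz. pose proof (Hd z Hz) as H1. pose proof (HG z Hz) as H2.
    apply is_C_derive_unique in H1. apply is_C_derive_unique in H2. congruence. }
  assert (Ed : forall n, d' n = dd a M c n).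
  { assert (Z : forall n, (d' n - dd a M c n)%C = RtoC 0).
    { apply coef_zero. intros z Hz.
      pose proof (is_series_minus _ _ _ _ (Hd' z Hz) (HGc z Hz)) as H.
      rewrite (EgG z Hz) in H.
      replace (RtoC 0) with (plus (G z) (opp (G z))) by (change ((G z + - G z)%C = RtoC 0); ring).
      eapply is_series_ext. 2: exact H. intros n. cbv beta.
      change ((d' n * Cpow z n + - (dd a M c n * Cpow z n))%C = ((d' n - dd a M c n) * Cpow z n)%C). ring. }
    intros n. specialize (Z n).
    replace (d' n) with ((d' n - dd a M c n) + dd a M c n)%C by ring. rewrite Z. ring. }
  assert (ET : T' = T).
  { apply (is_series_R_unique (S2_weight (dd a M c))); auto.
    eapply is_series_ext. 2: exact HT'. intros n. unfold S2_weight. rewrite Ed. reflexivity. }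
  subst T'. rewrite Ed, dd0 by auto. unfold dco.
  rewrite !Cmod_mult, Cmod_INR. simpl Cpow. rewrite Cmod_1. simpl INR.
  set (N := N_M a M).
  assert (HN : 1 <= N) by apply N_ge1.
  assert (Hv : is_series (fun m => plus (uu a M c m) (if Nat.eqb m 0 then Cmod (c 1%nat) ^ 2 else 0))
                 (plus T (Cmod (c 1%nat) ^ 2))).
  { apply (is_series_plus (K := R_AbsRing) (V := R_NormedModule)); auto. apply is_series_indicator0. }
  assert (Hw : is_series (fun m => N ^ 2 * S2_weight c (S m)) (N ^ 2 * s)).
  { apply (is_series_scal_l (V := R_NormedModule)).
    apply (is_series_incr_1 (S2_weight c)).
    replace (plus s (S2_weight c 0%nat)) with s. auto.
    change (s = s + S2_weight c 0%nat). unfold S2_weight. simpl INR. simpl pow. rewrite !Rmult_0_l, Rplus_0_r. reflexivity. }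
  assert (Hle : T + Cmod (c 1%nat) ^ 2 <= N ^ 2 * s).
  { apply (series_R_le _ _ _ _ Hv Hw). intros m. change (uu a M c m + (if Nat.eqb m 0 then Cmod (c 1%nat) ^ 2 else 0) <= N ^ 2 * S2_weight c (S m)).
    destruct m.
    - simpl. unfold uu. rewrite Nat.mul_0_r. simpl INR. unfold S2_weight. simpl INR.
      assert (1 <= N ^ 2) by nra. pose proof (pow2_ge_0 (Cmod (c 1%nat))). nra.
    - change (uu a M c (S m) + 0 <= N ^ 2 * S2_weight c (S (S m))). destruct (uu_bound a M c Ha (S m)) as [U1 U2]. fold N in U2. lra. }
  assert (Hs0 : 0 <= s).
  { apply (series_R_le (fun _ => 0) (S2_weight c) 0 s); auto. apply is_series_R0. apply S2_weight_nonneg. }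
  assert (HT0 : 0 <= T).
  { apply (series_R_le (fun _ => 0) (uu a M c) 0 T); auto. apply is_series_R0. intros m. apply (uu_bound a M c Ha m). }
  apply Rle_trans with (sqrt (N ^ 2 * (Cmod (c 0%nat) ^ 2 + s))).
  - apply sqrt_le_1_alt. replace (1 * Cmod (c 1%nat) * 1) with (Cmod (c 1%nat)) by ring.
    pose proof (pow2_ge_0 (Cmod (c 0%nat))). assert (0 <= N ^ 2) by nra. nra.
  - rewrite sqrt_mult_alt by nra. rewrite sqrt_pow2 by lra.
    pose proof (sqrt_pos (Cmod (c 0%nat) ^ 2 + s)). nra.
Qed.


Lemma witness a M n : 0 < Cmod a < 1 -> (0 < M)%nat -> (1 <= n)%nat ->
  exists f g rf, in_S2 f /\ is_S2norm f rf /\ rf <= 1 /\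
    is_Dphi (fun z => (a * Cpow z M)%C) f g /\ in_S2 g /\
    is_S2norm g (sqrt ((if Nat.eqb n 1 then 1 else 0) + (INR M * INR (n - 1) * Cmod a ^ (n - 1)) ^ 2)).
Proof.
  intros Ha HM Hn.
  assert (HnR : INR n <> 0) by (apply not_0_INR; lia).
  set (c := fun j => if Nat.eqb j n then RtoC (/ INR n) else RtoC 0).
  set (f := fun z => (RtoC (/ INR n) * Cpow z n)%C).
  assert (Hc : has_coeffs f c).
  { intros z Hz.
    assert (E : sum_n (fun j => (c j * Cpow z j)%C) n = f z).
    { rewrite sum_n_lower_zero. unfold c, f. rewrite Nat.eqb_refl. reflexivity.
      intros j Hj. unfold c. destruct (Nat.eqb_spec j n). lia.
      change (RtoC 0 * Cpow z j = RtoC 0)%C. ring. }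
    rewrite <- E. apply (is_series_finite (K := C_AbsRing) (V := C_NormedModule)).
    intros j Hj. unfold c. destruct (Nat.eqb_spec j n). lia.
    change (RtoC 0 * Cpow z j = RtoC 0)%C. ring. }
  assert (Hw : is_series (S2_weight c) 1).
  { assert (E : (sum_n (S2_weight c) n : R) = 1).
    { rewrite sum_n_lower_zero. unfold S2_weight, c. rewrite Nat.eqb_refl.
      rewrite Cmod_R, Rabs_pos_eq. field. auto.
      apply Rlt_le, Rinv_0_lt_compat. apply lt_0_INR. lia.
      intros j Hj. unfold S2_weight, c. destruct (Nat.eqb_spec j n). lia.
      rewrite Cmod_0. change (INR j ^ 2 * 0 ^ 2 = 0). ring. }
    rewrite <- E. apply (is_series_finite (K := R_AbsRing) (V := R_NormedModule)).
    intros j Hj. unfold S2_weight, c. destruct (Nat.eqb_spec j n). lia.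
    rewrite Cmod_0. change (INR j ^ 2 * 0 ^ 2 = 0). ring. }
  destruct (construct a M f c 1 Ha HM Hc Hw) as [g [Hd [Hg [_ HT]]]].
  set (V := INR M * INR (n - 1) * Cmod a ^ (n - 1)).
  assert (Hu : is_series (uu a M c) (V ^ 2)).
  { assert (E : (sum_n (uu a M c) (n - 1) : R) = V ^ 2).
    { rewrite sum_n_lower_zero. unfold uu, dco, c. replace (S (n - 1)) with n by lia.
      rewrite Nat.eqb_refl. rewrite !Cmod_mult, Cmod_INR, Cmod_R, Rabs_pos_eq, Cmod_pow, mult_INR.
      unfold V. field. auto.
      apply Rlt_le, Rinv_0_lt_compat. apply lt_0_INR. lia.
      intros j Hj. unfold uu, dco, c. destruct (Nat.eqb_spec (S j) n). lia.
      rewrite !Cmod_mult, Cmod_0. change (INR (M * j) ^ 2 * (Cmod (INR (S j)) * 0 * Cmod (Cpow a j)) ^ 2 = 0). ring. }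
    rewrite <- E. apply (is_series_finite (K := R_AbsRing) (V := R_NormedModule)).
    intros j Hj. unfold uu, dco, c. destruct (Nat.eqb_spec (S j) n). lia.
    rewrite !Cmod_mult, Cmod_0. change (INR (M * j) ^ 2 * (Cmod (INR (S j)) * 0 * Cmod (Cpow a j)) ^ 2 = 0). ring. }
  assert (Hc0 : c 0%nat = RtoC 0) by (unfold c; destruct (Nat.eqb_spec 0 n); [lia|reflexivity]).
  exists f, g, 1. split; [|split; [|split; [|split; [|split]]]].
  - exists c. split; auto. exists 1; auto.
  - exists c, 1. split; auto. split; auto. rewrite Hc0, Cmod_0. replace (0 ^ 2 + 1) with 1 by ring.
    symmetry; apply sqrt_1.
  - lra.
  - auto.
  - exists (dd a M c). split; auto. exists (V ^ 2). apply HT; auto.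
  - exists (dd a M c), (V ^ 2). split; auto. split. apply HT; auto.
    f_equal. f_equal. rewrite dd0 by auto. unfold dco, c. simpl Cpow.
    rewrite !Cmod_mult, Cmod_INR, Cmod_1. simpl INR.
    destruct (Nat.eqb_spec 1 n).
    + subst n. simpl Nat.eqb. rewrite Cmod_R, Rabs_pos_eq. simpl INR. field. simpl INR. lra.
    + replace (Nat.eqb n 1) with false by (symmetry; apply Nat.eqb_neq; lia).
      rewrite Cmod_0. ring.
Qed.

Theorem theorem5p1 (a : C) (M : nat) :
  0 < Cmod a < 1 -> (0 < M)%nat ->
  let phi := fun z : C => (a * Cpow z M)%C in
  (forall f, in_S2 f -> exists g, is_Dphi phi f g /\ in_S2 g) /\
  Dphi_opnorm phi = Finite (N_M a M).
Proof.
  intros Ha HM phi. split.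
  - intros f [c [Hc [s Hs]]].
    destruct (construct a M f c s Ha HM Hc Hs) as [g [Hd [Hg [[T HTu] HT]]]].
    exists g. split; auto. exists (dd a M c). split; auto. exists T. auto.
  - unfold Dphi_opnorm. apply is_lub_Rbar_unique. split.
    + intros r (f & g & rf & _ & Hf & Hrf & Hd & _ & Hg). simpl.
      apply (upper a M f g rf r); auto.
    + intros b Hb. apply Hb.
      destruct (nu_facts a Ha) as [H2 [H3 H4]].
      unfold N_M. rewrite H4.
      set (V := INR M * INR (nu_of a - 1) * Cmod a ^ (nu_of a - 1)).
      assert (HV0 : 0 <= V).
      { unfold V. apply Rmult_le_pos. apply Rmult_le_pos; apply pos_INR. apply pow_le. lra. }
      destruct (Rle_dec V 1) as [HV|HV].
      * rewrite Rmax_left by auto.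
        destruct (witness a M 1 Ha HM (le_n 1)) as (f & g & rf & W).
        exists f, g, rf.
        assert (Er : sqrt ((if Nat.eqb 1 1 then 1 else 0) + (INR M * INR (1 - 1) * Cmod a ^ (1 - 1)) ^ 2) = 1).
        { simpl. rewrite Rmult_0_r, Rmult_0_l. transitivity (sqrt 1); [f_equal; ring | apply sqrt_1]. }
        rewrite Er in W. exact W.
      * rewrite Rmax_right by lra.
        destruct (witness a M (nu_of a) Ha HM ltac:(lia)) as (f & g & rf & W).
        exists f, g, rf.
        replace (Nat.eqb (nu_of a) 1) with false in W by (symmetry; apply Nat.eqb_neq; lia).
        fold V in W. replace (0 + V ^ 2) with (V ^ 2) in W by ring.
        rewrite sqrt_pow2 in W by auto. exact W.
Qed.
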